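(* There is a deterministic sorting algorithm with error $2$ that, given $n$ elements, uses at most $4 n^{3/2}$ comparisons; that is, it outputs a $2$-sorted ordering of the elements.
   Context: Model of imprecise comparisons: there are $n$ elements, each with a fixed unknown real value; we identify an element with its value. Asked to compare $x_i$ and $x_j$, the comparator answers either ''$x_i \ge x_j$'' or ''$x_j \ge x_i$''. If $|x_i-x_j|>1$ the answer is correct; if $|x_i-x_j|\le 1$ the answer is arbitrary (possibly adversarial and adaptive). An ordering $x_{\pi(1)},\dots,x_{\pi(n)}$ is $k$-sorted if $x_{\pi(i)} \ge x_{\pi(j)} - k$ for every $i>j$. Comparison bounds are worst case over inputs and comparator behaviours. *)

(* Defs.v *)
From HB Require Import structures.
From mathcomp Require Import all_boot all_order all_algebra all_fingroup.
From mathcomp Require Import reals.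
Set Implicit Arguments. Unset Strict Implicit. Unset Printing Implicit Defensive.
Import Order.TTheory GRing.Theory Num.Theory.
Local Open Scope ring_scope.

(* A deterministic comparison algorithm on n elements (indexed by 'I_n) is a
   finite decision tree.  [Node i j t1 t2] asks the comparator to compare
   x_i and x_j; the answer "x_i >= x_j" continues with t1, the answer
   "x_j >= x_i" continues with t2.  A [Leaf p] outputs the ordering
   x_{p 0}, x_{p 1}, ..., x_{p (n-1)}. *)
Inductive dtree (n : nat) : Type :=
  | Leaf of {perm 'I_n}
  | Node of 'I_n & 'I_n & dtree n & dtree n.

(* [run x t c p] : on input values x, for some behaviour of the imprecise
   comparator (an answer is forced to be correct only when the two values
   differ by more than 1; otherwise arbitrary / adversarial / adaptive),
   the algorithm t performs exactly c comparisons and outputs p. *)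
Inductive run (R : realType) (n : nat) (x : 'I_n -> R) :
    dtree n -> nat -> {perm 'I_n} -> Prop :=
  | run_leaf (p : {perm 'I_n}) : run x (Leaf p) 0 p
  | run_ge (i j : 'I_n) (t1 t2 : dtree n) (c : nat) (p : {perm 'I_n}) :
      ~ (x j - x i > 1) -> run x t1 c p -> run x (Node i j t1 t2) c.+1 p
  | run_le (i j : 'I_n) (t1 t2 : dtree n) (c : nat) (p : {perm 'I_n}) :
      ~ (x i - x j > 1) -> run x t2 c p -> run x (Node i j t1 t2) c.+1 p.

Definition ksorted (R : realType) (n : nat) (k : R) (x : 'I_n -> R)
    (p : {perm 'I_n}) : Prop :=
  forall a b : 'I_n, (b < a)%N -> x (p b) - k <= x (p a).

(* Main.v *)
Require Import Defs.
From HB Require Import structures.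
From mathcomp Require Import all_boot all_order all_algebra all_fingroup.
From mathcomp Require Import reals.
From mathcomp Require Import ring lra zify.
Set Implicit Arguments. Unset Strict Implicit. Unset Printing Implicit Defensive.
Import Order.TTheory GRing.Theory Num.Theory.

Section Alg.
Variables (n q : nat).
Definition know := 'I_n -> 'I_n -> option bool.
Definition upd (kn : know) (i j : 'I_n) (b : bool) : know :=
  fun u w => if i == j then kn u w else
    if (u == i) && (w == j) then Some b else
    if (u == j) && (w == i) then Some (~~ b) else kn u w.
Definition ask (kn : know) (i j : 'I_n) (k : bool -> know -> dtree n) : dtree n :=
  match kn i j with
  | Some b => k b kn
  | None => Node i j (k true (upd kn i j true)) (k false (upd kn i j false))
  end.
Fixpoint ask_all (kn : know) (w : 'I_n) (pre : seq 'I_n) (k : know -> dtree n) : dtree n :=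
  match pre with [::] => k kn | u :: pre' => ask kn w u (fun _ kn' => ask_all kn' w pre' k) end.
Fixpoint rr (kn : know) (pre rest : seq 'I_n) (k : know -> dtree n) : dtree n :=
  match rest with [::] => k kn
  | w :: rest' => ask_all kn w pre (fun kn' => rr kn' (rcons pre w) rest' k) end.
Fixpoint part (kn : know) (v : 'I_n) (zs : seq 'I_n)
   (k : know -> seq 'I_n -> seq 'I_n -> dtree n) : dtree n :=
  match zs with [::] => k kn [::] [::]
  | z :: zs' => ask kn v z (fun b kn' => part kn' v zs' (fun kn'' lo hi =>
        k kn'' (if b then z :: lo else lo) (if b then hi else z :: hi))) end.
Definition beats (kn : know) (u w : 'I_n) : bool := kn u w == Some true.
Definition good (kn : know) (S : seq 'I_n) (v : 'I_n) : bool :=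
  (q <= count (beats kn v) S) && (q <= count (beats kn ^~ v) S).
Fixpoint solve (fuel : nat) (kn : know) (r : nat) (A : seq 'I_n)
    (k : know -> seq 'I_n -> dtree n) : dtree n :=
  match fuel with
  | 0 => k kn A
  | fuel'.+1 =>
    match A with
    | [::] => k kn [::]
    | a :: _ =>
      let S := take (4*q+1) A in
      rr kn (take r S) (drop r S) (fun kn1 =>
        let v := nth a S (find (good kn1 S) S) in
        part kn1 v [seq z <- A | z != v] (fun kn2 lo hi =>
          solve fuel' kn2 (count (mem S) lo) lo (fun kn3 slo =>
            solve fuel' kn3 (count (mem S) hi) hi (fun kn4 shi =>
              k kn4 (slo ++ v :: shi)))))
    end
  end.
Definition lperm (l : seq 'I_n) : {perm 'I_n} :=
  match @idP (injectiveb (fun i : 'I_n => nth i l i)) with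
  | ReflectT H => perm (injectiveP _ H)
  | ReflectF _ => 1%g
  end.
Definition algo : dtree n :=
  solve n (fun _ _ => None) 0 (enum 'I_n) (fun _ l => Leaf (lperm l)).
End Alg.


Section Tourn.
Variables (T : eqType) (rel : T -> T -> bool).
Hypothesis irr : forall u, rel u u = false.

Lemma pair_count w L : w \notin L -> (forall u, u \in L -> rel u w + rel w u = 1) ->
  count (rel w) L + \sum_(u <- L) (rel u w : nat) = size L.
Proof.
elim: L => [|u L IH]; first by rewrite big_nil.
rewrite inE negb_or => /andP[nwu nwL] h.
rewrite big_cons /= -(IH nwL) => [|u0 hu0]; last by apply: h; rewrite inE hu0 orbT.
have := h u (mem_head _ _); lia.
Qed.

Lemma tourn_sum L : uniq L -> (forall u w, u \in L -> w \in L -> u != w -> rel u w + rel w u = 1) ->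
  2 * (\sum_(u <- L) count (rel u) L) = size L * (size L).-1.
Proof.
elim: L => [|w L IH]; first by rewrite big_nil.
move=> /= /andP[nw uL] h.
rewrite big_cons /= irr add0n.
have -> : \sum_(u <- L) count (rel u) (w :: L) = \sum_(u <- L) (rel u w : nat) + \sum_(u <- L) count (rel u) L.
  by rewrite -big_split /=; apply: eq_bigr.
have hl : {subset L <= w :: L} by move=> u hu; rewrite inE hu orbT.
have e1 := IH uL (fun u v hu hv => h u v (hl _ hu) (hl _ hv)).
have e2 : count (rel w) L + \sum_(u <- L) (rel u w : nat) = size L.
  apply: (pair_count nw) => u hu; apply: h; rewrite ?mem_head ?hl //.
  by apply: contraNneq nw => <-.
move: e1 e2; case: (size L) => [|m]; lia.
Qed.

Lemma small_count L q : uniq L ->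
  (forall u w, u \in L -> w \in L -> u != w -> rel u w + rel w u = 1) ->
  (forall u, u \in L -> count (rel u) L < q) -> size L <= 2 * q.
Proof.
move=> uL ht hc.
have e := tourn_sum uL ht.
have hs : \sum_(u <- L) (count (rel u) L).+1 <= \sum_(u <- L) q.
  rewrite big_seq_cond [X in _ <= X]big_seq_cond; apply: leq_sum => u /andP[hu _].
  exact: hc.
move: hs; rewrite big_const_seq iter_addn_0 count_predT.
have -> : \sum_(u <- L) (count (rel u) L).+1 = \sum_(u <- L) count (rel u) L + size L.
  by rewrite -sum1_size -big_split /=; apply: eq_bigr => u _; rewrite addn1.
move: e; set l := size L; set Sm := \sum_(u <- L) _.
case: l => [|l] /=; nia.
Qed.
End Tourn.

Lemma exists_good (T : eqType) (rel : T -> T -> bool) (S : seq T) q :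
  uniq S -> (forall u, rel u u = false) ->
  (forall u w, u \in S -> w \in S -> u != w -> rel u w + rel w u = 1) ->
  size S = 4 * q + 1 ->
  has (fun v => (q <= count (rel v) S) && (q <= count (rel^~ v) S)) S.
Proof.
move=> uS irr ht hsz.
pose Lo := [seq u <- S | count (rel u) S < q].
pose Hi := [seq u <- S | count (rel^~ u) S < q].
have hLo : size Lo <= 2 * q.
  apply: (small_count (rel := rel) irr); first exact: filter_uniq.
    by move=> u w; rewrite !mem_filter => /andP[_ hu] /andP[_ hw]; apply: ht.
  move=> u; rewrite mem_filter => /andP[hu _]; apply: leq_ltn_trans hu.
  by rewrite count_filter; apply: sub_count => z /andP[].
have hHi : size Hi <= 2 * q.
  apply: (small_count (rel := fun u w => rel w u) irr); first exact: filter_uniq.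
    by move=> u w; rewrite !mem_filter => /andP[_ hu] /andP[_ hw] nuw; rewrite addnC; apply: ht.
  move=> u; rewrite mem_filter => /andP[hu _]; apply: leq_ltn_trans hu.
  by rewrite count_filter; apply: sub_count => z /andP[].
apply/negPn/negP => /hasPn hn.
have e1 : count (predU (mem Lo) (mem Hi)) S = size S.
  rewrite -count_predT; apply: eq_in_count => u hu /=.
  rewrite !mem_filter hu !andbT.
  by move: (hn u hu); rewrite negb_and -!ltnNge.
have e2 : count (mem Lo) S = size Lo.
  by rewrite size_filter; apply: eq_in_count => u hu; rewrite /= mem_filter hu andbT.
have e3 : count (mem Hi) S = size Hi.
  by rewrite size_filter; apply: eq_in_count => u hu; rewrite /= mem_filter hu andbT.
have := count_predUI (mem Lo) (mem Hi) S.
rewrite e1 e2 e3; lia.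
Qed.


Section Pref.
Variable T : eqType.
Lemma count_mem_take (A : seq T) s g : uniq A ->
  count (mem (take s A)) [seq z <- A | g z] = count g (take s A).
Proof.
move=> uA; rewrite -{2}(cat_take_drop s A) filter_cat count_cat.
rewrite -(cat_take_drop s A) in uA.
rewrite cat_uniq in uA; case/and3P: uA => _ hdis _.
have -> : count (mem (take s A)) [seq z <- drop s A | g z] = 0.
  apply/eqP; rewrite -leqn0 leqNgt -has_count; apply/hasPn => z.
  rewrite mem_filter => /andP[_ hz] /=; apply/negP => hz'.
  by move/hasPn: hdis => /(_ z hz); rewrite hz'.
rewrite addn0 count_filter; apply: eq_in_count => z hz /=; by rewrite hz ?andbT ?andTb.
Qed.

Lemma take_count_mem (A : seq T) s g : uniq A ->
  take (count (mem (take s A)) [seq z <- A | g z]) [seq z <- A | g z] = [seq z <- take s A | g z].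
Proof.
move=> uA; rewrite count_mem_take // -size_filter.
by rewrite -{2}(cat_take_drop s A) filter_cat take_size_cat.
Qed.

Lemma count_take_mem (A : seq T) s : uniq A -> count (mem (take s A)) A = size (take s A).
Proof.
move=> uA; have := count_mem_take s predT uA; rewrite filter_predT => ->.
by rewrite count_predT.
Qed.
End Pref.


Section Runs.
Variables (R : realType) (n : nat) (x : 'I_n -> R).
Local Open Scope ring_scope.

Definition sound (kn : know n) := forall u w, kn u w = Some true -> ~ (x w - x u > 1).
Definition consis (kn : know n) := forall u w, kn w u = omap negb (kn u w).
Definition ext (kn kn' : know n) := forall u w b, kn u w = Some b -> kn' u w = Some b.

Lemma ext_refl kn : ext kn kn. Proof. by []. Qed.
Lemma ext_trans k1 k2 k3 : ext k1 k2 -> ext k2 k3 -> ext k1 k3.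
Proof. by move=> h1 h2 u w b /h1 /h2. Qed.

Lemma sound_false kn u w : sound kn -> consis kn -> kn u w = Some false -> ~ (x u - x w > 1).
Proof. by move=> hs hc e; apply: hs; rewrite hc e. Qed.

Lemma upd_ok kn i j (b : bool) : i != j -> kn i j = None -> sound kn -> consis kn ->
  (b -> ~ (x j - x i > 1)) -> (~~ b -> ~ (x i - x j > 1)) ->
  [/\ sound (upd kn i j b), consis (upd kn i j b), ext kn (upd kn i j b)
    & upd kn i j b i j = Some b].
Proof.
move=> nij kn0 hs hc hb1 hb2; rewrite /upd (negbTE nij).
have kn0' : kn j i = None by rewrite hc kn0.
split.
- move=> u w; case: ifP => [/andP[/eqP -> /eqP ->] [eb]|_]; first by apply: hb1; rewrite eb.
  case: ifP => [/andP[/eqP -> /eqP ->] [eb]|_]; first by apply: hb2; rewrite eb.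
  exact: hs.
- move=> u w.
  have hij := nij; move: hij.
  case: (eqVneq u i) => [eui|nui]; case: (eqVneq w j) => [ewj|nwj];
  case: (eqVneq u j) => [euj|nuj]; case: (eqVneq w i) => [ewi|nwi];
  subst => //= hij; rewrite ?eqxx ?(negbTE hij) ?(eq_sym j i) ?(negbTE hij) /= ?negbK //;
  try by rewrite hc.
  all: try by move: hij; rewrite ?eqxx.
- move=> u w b0 e.
  case: ifP => [/andP[/eqP eu /eqP ew]|_]; first by move: e; rewrite eu ew kn0.
  case: ifP => [/andP[/eqP eu /eqP ew]|_] //; by move: e; rewrite eu ew kn0'.
- by rewrite !eqxx.
Qed.

Lemma run_ask kn i j k c p : run x (ask kn i j k) c p -> sound kn -> consis kn ->
  exists b kn' c', [/\ c = ((kn i j == None) + c')%N, run x (k b kn') c' p,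
     sound kn', consis kn' & ext kn kn'] /\
   [/\ (b -> ~ (x j - x i > 1)), (~~ b -> ~ (x i - x j > 1)),
      (i != j -> kn' i j = Some b) & (forall t, kn i j = Some t -> b = t)].
Proof.
rewrite /ask => hr hs hc; move: hr; case e: (kn i j) => [t|] hr.
  exists t, kn, c; split; split => //.
  - by move=> ht; apply: hs; rewrite e ht.
  - by move/negbTE=> ht; apply: (sound_false hs hc); rewrite e ht.
  - by move=> t0 [->].
have hrun : forall b : bool, (b -> ~ (x j - x i > 1)) -> (~~ b -> ~ (x i - x j > 1)) ->
   forall c', run x (k b (upd kn i j b)) c' p ->
   exists b0 kn' c'', [/\ c'.+1 = (1 + c'')%N, run x (k b0 kn') c'' p,
     sound kn', consis kn' & ext kn kn'] /\
   [/\ (b0 -> ~ (x j - x i > 1)), (~~ b0 -> ~ (x i - x j > 1)),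
      (i != j -> kn' i j = Some b0) & (forall t, @None bool = Some t -> b0 = t)].
  move=> b hb1 hb2 c' hr'; exists b, (upd kn i j b), c'.
  case: (eqVneq i j) => [eij|nij].
    subst j; have e2 : upd kn i i b = kn by rewrite /upd eqxx.
    by rewrite e2 in hr' *; split; split => //; rewrite eqxx.
  have [h1 h2 h3 h4] := upd_ok nij e hs hc hb1 hb2.
  by split; split.
inversion hr; subst.
- by apply: (hrun true).
- by apply: (hrun false).
Qed.

Lemma known_sym kn u w : consis kn -> kn u w != None -> kn w u != None.
Proof. by move=> hc; rewrite (hc u w); case: (kn u w). Qed.

Lemma run_ask_all w pre kn k c p : run x (ask_all kn w pre k) c p -> sound kn -> consis kn ->
  exists kn' c1 c2, [/\ c = (c1 + c2)%N, (c1 <= size pre)%N, run x (k kn') c2 p,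
     sound kn' & consis kn'] /\ ext kn kn' /\
     (forall u, u \in pre -> u != w -> kn' w u != None).
Proof.
elim: pre kn c => [|u pre IH] kn c /= hr hs hc.
  by exists kn, 0%N, c; split; [split | split].

have [b [kn1 [c' [[e1 hr1 hs1 hc1 he1] [_ _ hk1 _]]]]] := run_ask hr hs hc.
have [kn2 [c1 [c2 [[e2 hsz hr2 hs2 hc2] [he2 hk2]]]]] := IH _ _ hr1 hs1 hc1.
exists kn2, ((kn w u == None) + c1)%N, c2; split; first split => //.
- by rewrite e1 e2 addnA.
- by case: (kn w u == None) => /=; lia.
split; first exact: ext_trans he1 he2.
move=> u0; rewrite inE => /orP[/eqP ->|hu0] nuw; last exact: hk2.
have := hk1; rewrite eq_sym => /(_ nuw) e.
by rewrite (he2 _ _ _ e).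
Qed.

Lemma run_rr rest pre kn k c p : run x (rr kn pre rest k) c p -> sound kn -> consis kn ->
  exists kn' c1 c2, [/\ c = (c1 + c2)%N,
     (c1 + 'C(size pre, 2) <= 'C(size pre + size rest, 2))%N, run x (k kn') c2 p,
     sound kn' & consis kn'] /\ ext kn kn' /\
     (forall u w, u \in pre ++ rest -> w \in pre ++ rest -> u != w ->
         ~~ ((u \in pre) && (w \in pre)) -> kn' u w != None).
Proof.
elim: rest pre kn c => [|w rest IH] pre kn c /= hr hs hc.
  exists kn, 0%N, c; split; first split => //; first by rewrite addn0.
  by split => // u w; rewrite cats0 => -> ->.
have [kn1 [c1 [c2 [[e1 hsz hr1 hs1 hc1] [he1 hk1]]]]] := run_ask_all hr hs hc.
have [kn2 [c3 [c4 [[e2 hsz2 hr2 hs2 hc2] [he2 hk2]]]]] := IH _ _ _ hr1 hs1 hc1.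
exists kn2, (c1 + c3)%N, c4; split; first split => //.
- by rewrite e1 e2 addnA.
- move: hsz2; rewrite size_rcons binS bin1 addnS -addSn; lia.
split; first exact: ext_trans he1 he2.
have key : forall u v, u \in pre -> v = w -> u != v -> kn2 u v != None.
  move=> u v hu -> nuv; apply: known_sym hc2 _.
  have := hk1 u hu nuv; case e: (kn1 w u) => [b|] // _.
  by rewrite (he2 _ _ _ e).
move=> u v; rewrite -cat_rcons => hu hv nuv hn.
case hp: ((u \in rcons pre w) && (v \in rcons pre w)); last first.
  by apply: hk2 => //; rewrite hp.
move/andP: hp; rewrite !mem_rcons !inE => -[/orP[/eqP eu|hu'] /orP[/eqP ev|hv']].
- by move: nuv; rewrite eu ev eqxx.
- by apply: known_sym hc2 _; apply: key => //; rewrite eq_sym.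
- by apply: key.
- by move: hn; rewrite hu' hv'.
Qed.

Lemma run_part v zs kn k c p : run x (part kn v zs k) c p -> sound kn -> consis kn -> uniq zs ->
  exists kn' (f : pred 'I_n) c1 c2, [/\ c = (c1 + c2)%N,
     (c1 <= count (fun z => kn v z == None) zs)%N,
     run x (k kn' [seq z <- zs | f z] [seq z <- zs | ~~ f z]) c2 p,
     sound kn' & consis kn'] /\ ext kn kn' /\
     (forall z, z \in zs -> (f z -> ~ (x z - x v > 1)) /\ (~~ f z -> ~ (x v - x z > 1))) /\
     (forall z b, z \in zs -> kn v z = Some b -> f z = b).
Proof.
elim: zs kn k c => [|z zs IH] kn k c /= hr hs hc.
  move=> _; exists kn, xpred0, 0%N, c.
  by split; [split | split; [|split]].
case/andP=> nz uz.
have [b [kn1 [c' [[e1 hr1 hs1 hc1 he1] [hb1 hb2 _ hbk]]]]] := run_ask hr hs hc.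
have [kn2 [f [c1 [c2 [[e2 hsz hr2 hs2 hc2] [he2 [hf hfk]]]]]]] := IH _ _ _ hr1 hs1 hc1 uz.
pose g := fun u => if u == z then b else f u.
have eqf : [seq u <- zs | g u] = [seq u <- zs | f u].
  apply: eq_in_filter => u hu; rewrite /g; case: eqP => // eu.
  by move: nz; rewrite -eu hu.
have eqf' : [seq u <- zs | ~~ g u] = [seq u <- zs | ~~ f u].
  apply: eq_in_filter => u hu; rewrite /g; case: eqP => // eu.
  by move: nz; rewrite -eu hu.
exists kn2, g, ((kn v z == None) + c1)%N, c2; split; first split => //.
- by rewrite e1 e2 addnA.
- rewrite leq_add2l (leq_trans hsz) //; apply: sub_count => u /=.
  by apply: contraTT; case e: (kn v u) => [t|] //; rewrite (he1 _ _ _ e).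
- by rewrite eqf eqf' /g eqxx; case: b {hb1 hb2 hbk hr1 eqf eqf' g} hr2.
split; first exact: ext_trans he1 he2.
split.
  move=> u; rewrite inE /g => /orP[/eqP ->|hu]; first by rewrite eqxx.
  case: eqP => [->|_]; [by [] | exact: hf].
move=> u t; rewrite inE /g => /orP[/eqP ->|hu] e; first by rewrite eqxx; exact: hbk.
case: eqP => [eu|_]; first by rewrite eu in e; exact: hbk.
by apply: hfk hu (he1 _ _ _ e).
Qed.
End Runs.

Local Open Scope ring_scope.

Lemma bin2_mul m : ('C(m, 2) * 2 = m * m.-1)%N.
Proof. elim: m => [|m IH] //; rewrite binS bin1 mulnDl IH; case: m {IH} => //= m; lia. Qed.

Section Pot.
Variables (R : realType) (q : nat).
Definition Cb (m : nat) : R := ('C(m, 2))%:R.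
Lemma CbE m : Cb m = m%:R * (m%:R - 1) / 2.
Proof.
rewrite /Cb; have h := bin2_mul m.
have : (('C(m,2) * 2)%N%:R : R) = (m * m.-1)%N%:R by rewrite h.
rewrite !natrM; case: m {h} => [|m] /=; first by rewrite !mul0r.
rewrite -[m.+1%:R]natr1 addrK.
set C := ('C(_, _))%:R; set M := (m%:R : R); move=> e.
have -> : (M + 1) * M / 2 = (M + 1) * M * 2^-1 by [].
rewrite -e -mulrA divff ?mulr1 //.
by rewrite pnatr_eq0.
Qed.
Definition Phi (m r : nat) : R :=
  m%:R ^+ 2 / (2 * q%:R + 2) + 5 * q%:R * m%:R - (4 * q%:R ^+ 2 - 4 * q%:R) - Cb r.
Definition Psi (m r : nat) : R := if (m <= 4 * q + 1)%N then Cb m - Cb r else Phi m r.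

Lemma Psi_le_Phi m r : (q <= m)%N -> Psi m r <= Phi m r.
Proof.
rewrite /Psi /Phi; case: ifP => // hm hq.
rewrite !CbE.
have hm' : (m%:R : R) <= 4 * q%:R + 1 by rewrite -(ler_nat R) natrD natrM in hm.
have hq' : (q%:R : R) <= m%:R by rewrite ler_nat.
have hd : 0 < 2 * q%:R + 2 :> R by rewrite ltr_pwDr // mulr_ge0.
have h0 : 0 <= m%:R ^+ 2 / (2 * q%:R + 2) :> R by rewrite divr_ge0 ?sqr_ge0 ?ltW.
have hq0 : 0 <= q%:R :> R by [].
have hp : 0 <= (m%:R - q%:R) * (4 * q%:R + 1 - m%:R) :> R by rewrite mulr_ge0 ?subr_ge0.
nra.
Qed.

Lemma node_real (Q A B R1 rr P1 P2 : R) : 0 <= Q -> Q <= A -> Q <= B ->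
  P1 <= A ^+ 2 / (2 * Q + 2) + 5 * Q * A - (4 * Q ^+ 2 - 4 * Q) - R1 * (R1 - 1) / 2 ->
  P2 <= B ^+ 2 / (2 * Q + 2) + 5 * Q * B - (4 * Q ^+ 2 - 4 * Q) - (4 * Q - R1) * (4 * Q - R1 - 1) / 2 ->
  (4 * Q + 1) * (4 * Q + 1 - 1) / 2 - rr + (A + B + 1 - (4 * Q + 1)) + P1 + P2 <=
  (A + B + 1) ^+ 2 / (2 * Q + 2) + 5 * Q * (A + B + 1) - (4 * Q ^+ 2 - 4 * Q) - rr.
Proof.
move=> hQ0 hQA hQB h1 h2.
have hd : 0 < 2 * Q + 2 by lra.
have key : A + B - Q <= ((A + B + 1) ^+ 2 - A ^+ 2 - B ^+ 2) / (2 * Q + 2).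
  rewrite ler_pdivlMr //.
  have hp : 0 <= (A - Q) * (B - Q) by rewrite mulr_ge0 ?subr_ge0.
  nra.
have e2 : (A + B + 1) ^+ 2 / (2 * Q + 2) - A ^+ 2 / (2 * Q + 2) - B ^+ 2 / (2 * Q + 2) =
          ((A + B + 1) ^+ 2 - A ^+ 2 - B ^+ 2) / (2 * Q + 2) by rewrite !mulrBl.
have hrr : R1 * (4 * Q - R1) <= 4 * Q ^+ 2.
  have : 0 <= (2 * Q - R1) ^+ 2 by apply: sqr_ge0.
  nra.
move: key e2 h1 h2.
set D := (_ / (2 * Q + 2)); set MA := (A + B + 1) ^+ 2 / _.
set AA := A ^+ 2 / _; set BB := B ^+ 2 / _.
move=> key e2 h1 h2.
nra.
Qed.

Lemma node_ineq m r a b r1 r2 : (4 * q + 1 < m)%N -> (r <= 4 * q + 1)%N ->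
  (a + b + 1 = m)%N -> (r1 + r2 = 4 * q)%N -> (q <= r1 <= a)%N -> (q <= r2 <= b)%N ->
  Cb (4 * q + 1) - Cb r + (m - (4 * q + 1))%N%:R + Psi a r1 + Psi b r2 <= Psi m r.
Proof.
move=> hm hr eab er /andP[hq1 hr1] /andP[hq2 hr2].
have ha : (q <= a)%N by apply: leq_trans hr1.
have hb : (q <= b)%N by apply: leq_trans hr2.
have h1 := Psi_le_Phi r1 ha; have h2 := Psi_le_Phi r2 hb.
have ePm : Psi m r = Phi m r by rewrite /Psi leqNgt hm.
have e4 : ((4 * q + 1)%N%:R : R) = 4 * q%:R + 1 by rewrite natrD natrM.
rewrite ePm; move: h1 h2; rewrite /Phi natrB ?(ltnW hm) // -eab !CbE e4 !natrD.
have eR2 : (r2%:R : R) = 4 * q%:R - r1%:R.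
  have : ((r1 + r2)%N%:R : R) = (4 * q)%N%:R by rewrite er.
  rewrite natrD natrM => e; lra.
rewrite eR2; apply: node_real; by rewrite ?ler_nat.
Qed.

Lemma big_bound (nn : nat) : (66 <= nn)%N -> (9 * q ^ 2 <= nn)%N -> (nn < 9 * q.+1 ^ 2)%N ->
  Psi nn 0 <= 4 * (nn%:R * Num.sqrt nn%:R).
Proof.
move=> h66 hlo hhi.
have hq1 : (1 <= q)%N by nia.
have hs : (4 * q + 1 < nn)%N by nia.
rewrite /Psi leqNgt hs /= /Phi CbE mul0r mul0r subr0.
set t := Num.sqrt (nn%:R : R).
have ht0 : 0 <= t by apply: sqrtr_ge0.
have ht2 : t ^+ 2 = nn%:R by apply: sqr_sqrtr.
have hlo' : 9 * q%:R ^+ 2 <= (nn%:R : R).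
  by move: hlo; rewrite -(ler_nat R) natrM natrX => h; lra.
have hhi' : (nn%:R : R) < 9 * (q%:R + 1) ^+ 2.
  by move: hhi; rewrite -(ltr_nat R) natrM natrX -natr1 => h; lra.
have hq0 : 1 <= (q%:R : R) by rewrite ler1n.
have h3q : 3 * q%:R <= t by nra.
have h3q1 : t < 3 * (q%:R + 1) by nra.
have hN : 0 <= (nn%:R : R) by [].
have hd : 0 < 2 * q%:R + 2 :> R by lra.
have k1 : nn%:R ^+ 2 / (2 * q%:R + 2) <= 3 / 2 * (nn%:R * t).
  rewrite ler_pdivrMr //.
  rewrite -ht2; nra.
nra.
Qed.

Lemma small_bound (nn : nat) : (nn <= 65)%N -> Cb nn <= 4 * (nn%:R * Num.sqrt nn%:R).
Proof.
move=> h; rewrite CbE.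
set t := Num.sqrt (nn%:R : R).
have ht0 : 0 <= t by apply: sqrtr_ge0.
have ht2 : t ^+ 2 = nn%:R by apply: sqr_sqrtr.
have h' : (nn%:R : R) <= 65 by rewrite (ler_nat R nn 65).
have hN : 0 <= (nn%:R : R) by [].
have ht : t <= 81 / 10 by nra.
have k : nn%:R - 1 <= 8 * t by nra.
nra.
Qed.
End Pot.

Fixpoint qsearch (f k nn : nat) : nat :=
  match f with 0 => k | f'.+1 => if (9 * k.+1 ^ 2 <= nn)%N then qsearch f' k.+1 nn else k end.

Lemma qsearch_spec f k nn : (9 * k ^ 2 <= nn)%N -> (nn <= k + f)%N ->
  (9 * (qsearch f k nn) ^ 2 <= nn)%N /\ (nn < 9 * (qsearch f k nn).+1 ^ 2)%N.
Proof.
elim: f k => [|f IH] k /= h1 h2.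
  by split => //; rewrite addn0 in h2; nia.
case: ifP => h3.
  by apply: IH => //; rewrite addSnnS.
by split => //; rewrite ltnNge h3.
Qed.

Definition qn (nn : nat) : nat := if (nn <= 65)%N then 16 else qsearch nn 0 nn.


Section Main.
Variables (R : realType) (n : nat) (x : 'I_n -> R) (q : nat).
Local Open Scope ring_scope.
Definition rel2 (u w : 'I_n) : bool := x u - 2 <= x w.
Definition known_pre (kn : know n) r (A : seq 'I_n) :=
  forall u w, u \in take r A -> w \in take r A -> u != w -> kn u w != None.

Lemma not_gt1 (y : R) : ~ (1 < y) -> y <= 1.
Proof. by move/negP; rewrite -leNgt. Qed.

Lemma run_solve f kn r A k c p :
  run x (solve q f kn r A k) c p -> sound x kn -> consis kn -> uniq A ->
  (size A <= f)%N -> (r <= size A)%N -> (r <= 4 * q + 1)%N -> known_pre kn r A ->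
  exists kn' l c1 c2, [/\ c = (c1 + c2)%N, run x (k kn' l) c2 p, sound x kn', consis kn'
     & ext kn kn'] /\
    [/\ perm_eq l A, pairwise rel2 l & (c1%:R <= Psi R q (size A) r)].
Proof.
elim: f kn r A k c => [|f IH] kn r A k c.
  move=> hr hs hc uA; rewrite leqn0 size_eq0 => /eqP eA; subst A.
  rewrite leqn0 => /eqP -> _ _.
  exists kn, [::], 0%N, c; split; first split => //.
  by split => //; rewrite /Psi /= subrr.
case: A => [|a A'] /=.
  move=> hr hs hc _ _; rewrite leqn0 => /eqP -> _ _.
  exists kn, [::], 0%N, c; split; first split => //.
  by split => //; rewrite /Psi /= subrr.
set A := a :: A'.
set S := take (4 * q + 1) A.
move=> hr hs hc uA hf hrA hrs hkp.
have uS : uniq S by apply: take_uniq.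
have hSA : {subset S <= A} by move=> z; apply: mem_take.
have hrS : (r <= size S)%N by rewrite size_take_min leq_min hrs hrA.
have [kn1 [c_rr [c' [[e1 hsz1 hr1 hs1 hc1] [he1 hk1]]]]] := run_rr hr hs hc.
rewrite size_takel // size_drop subnKC // in hsz1.
have allS : forall u w, u \in S -> w \in S -> u != w -> kn1 u w != None.
  move=> u w hu hw nuw.
  case hp: ((u \in take r S) && (w \in take r S)).
    case/andP: hp => hu' hw'.
    rewrite /S take_takel // in hu' hw'.
    have := hkp u w hu' hw' nuw.
    by case e: (kn u w) => [t|] //; rewrite (he1 _ _ _ e).
  by apply: hk1; rewrite ?cat_take_drop ?hp.
move: hr1 => /=.
set v := nth a S (find (good q kn1 S) S).
move=> hr1.
have hvA : v \in A.
  rewrite /v; case: (ltnP (find (good q kn1 S) S) (size S)) => hfs.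
    by apply: hSA; apply: mem_nth.
  by rewrite nth_default // mem_head.
set zs := [seq z <- A | z != v].
have uzs : uniq zs by apply: filter_uniq.
have [kn2 [g [c_p [c'' [[e2 hcp hr2 hs2 hc2] [he2 [hg hgk]]]]]]] := run_part hr1 hs1 hc1 uzs.
move: hr2 => /=; set lo := [seq z <- zs | g z]; set hi := [seq z <- zs | ~~ g z] => hr2.
have eszs : (size zs).+1 = size A.
  have h1 : count (predC (fun z => z != v)) A = 1%N.
    by rewrite (eq_count (a2 := pred1 v)) ?count_uniq_mem ?hvA // => z /=; rewrite negbK.
  by have := count_predC (fun z => z != v) A; rewrite h1 size_filter addn1.
have eslh : (size lo + size hi = size zs)%N.
  by rewrite -(count_predC g zs) /lo /hi !size_filter.
have elo : lo = [seq z <- A | (z != v) && g z].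
  by rewrite /lo /zs -filter_predI; apply: eq_filter => z /=; rewrite andbC.
have ehi : hi = [seq z <- A | (z != v) && ~~ g z].
  by rewrite /hi /zs -filter_predI; apply: eq_filter => z /=; rewrite andbC.
have hlo_sub : {subset lo <= zs} by move=> z; rewrite mem_filter => /andP[].
have hhi_sub : {subset hi <= zs} by move=> z; rewrite mem_filter => /andP[].
set rlo := count (mem S) lo.
set rhi := count (mem S) hi.
have erlo : rlo = count (fun z => (z != v) && g z) S by rewrite /rlo elo count_mem_take.
have erhi : rhi = count (fun z => (z != v) && ~~ g z) S by rewrite /rhi ehi count_mem_take.
have tlo : take rlo lo = [seq z <- S | (z != v) && g z] by rewrite /rlo elo take_count_mem.
have thi : take rhi hi = [seq z <- S | (z != v) && ~~ g z] by rewrite /rhi ehi take_count_mem.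
have hrlo_le : (rlo <= size lo)%N by apply: count_size.
have hrhi_le : (rhi <= size hi)%N by apply: count_size.
have hrlo_s : (rlo <= 4 * q + 1)%N.
  rewrite erlo; apply: leq_trans (count_size _ _) _; rewrite size_take_min; apply: geq_minl.
have hrhi_s : (rhi <= 4 * q + 1)%N.
  rewrite erhi; apply: leq_trans (count_size _ _) _; rewrite size_take_min; apply: geq_minl.
have kplo : known_pre kn2 rlo lo.
  move=> u w; rewrite tlo !mem_filter => /andP[_ hu] /andP[_ hw] nuw.
  by have := allS u w hu hw nuw; case e: (kn1 u w) => [t|] //; rewrite (he2 _ _ _ e).
have hszA : size A = (size A').+1 by [].
have hslA : (size lo < size A)%N by rewrite -eszs ltnS -eslh leq_addr.
have hshA : (size hi < size A)%N by rewrite -eszs ltnS -eslh leq_addl.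
have hszlo : (size lo <= f)%N by move: hf; rewrite -hszA; lia.
have hszhi : (size hi <= f)%N by move: hf; rewrite -hszA; lia.
have [kn3 [slo [c_lo [c3 [[e3 hr3 hs3 hc3 he3] [hpl hpwl hcl]]]]]] :=
  IH _ _ _ _ _ hr2 hs2 hc2 (filter_uniq _ uzs) hszlo hrlo_le hrlo_s kplo.
move: hr3 => /= hr3.
have kphi : known_pre kn3 rhi hi.
  move=> u w; rewrite thi !mem_filter => /andP[_ hu] /andP[_ hw] nuw.
  have := allS u w hu hw nuw; case e: (kn1 u w) => [t|] //.
  by rewrite (he3 _ _ _ (he2 _ _ _ e)).
have [kn4 [shi [c_hi [c4 [[e4 hr4 hs4 hc4 he4] [hph hpwh hch]]]]]] :=
  IH _ _ _ _ _ hr3 hs3 hc3 (filter_uniq _ uzs) hszhi hrhi_le hrhi_s kphi.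
exists kn4, (slo ++ v :: shi), (c_rr + c_p + c_lo + c_hi)%N, c4.
split; first split => //.
- by rewrite e1 e2 e3 e4 !addnA.
- by apply: (ext_trans he1); apply: (ext_trans he2); apply: (ext_trans he3).
have hloP : forall u, u \in slo -> x u <= x v + 1.
  move=> u; rewrite (perm_mem hpl) mem_filter => /andP[gu uz].
  have := (hg u uz).1 gu => /not_gt1; lra.
have hhiP : forall u, u \in shi -> x v <= x u + 1.
  move=> u; rewrite (perm_mem hph) mem_filter => /andP[gu uz].
  have := (hg u uz).2 gu => /not_gt1; lra.
split.
- apply: (perm_trans (_ : perm_eq _ (lo ++ v :: hi))).
    by apply: perm_cat => //; rewrite perm_cons.
  rewrite -[v :: hi]cat1s perm_catCA /= perm_sym.
  apply: (perm_trans (perm_to_rem hvA)); rewrite perm_cons rem_filter // perm_sym.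
  by rewrite /lo /hi (perm_filterC g zs).
- rewrite pairwise_cat pairwise_cons hpwl hpwh !andbT; apply/andP; split.
    apply/allrelP => u w hu; rewrite inE => /orP[/eqP ->|hw]; rewrite /rel2.
      by have := hloP u hu; lra.
    by have := hloP u hu; have := hhiP w hw; lra.
  by apply/allP => w hw; rewrite /rel2; have := hhiP w hw; lra.
- have hcrr : (c_rr%:R : R) <= Cb R (size S) - Cb R r.
    rewrite /Cb lerBrDr -natrD ler_nat; exact: hsz1.
  have knv : forall z, z \in S -> z != v -> kn1 v z != None.
    move=> z hz nzv; apply: allS => //; last by rewrite eq_sym.
    rewrite /v; case: (ltnP (find (good q kn1 S) S) (size S)) => hfs.
      by apply: mem_nth.
    by rewrite nth_default // /S /A addn1 /= mem_head.
  rewrite !natrD.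
  case: (leqP (size A) (4 * q + 1)) => hm.
  + have eS : S = A by rewrite /S take_oversize.
    have hcnt : count (fun z => kn1 v z == None) zs = 0%N.
      apply/eqP; rewrite -leqn0 leqNgt -has_count; apply/hasPn => z.
      rewrite /zs mem_filter => /andP[nzv hz] /=.
      by apply: knv; rewrite ?eS.
    have hcp0 : c_p = 0%N by apply/eqP; rewrite -leqn0 -hcnt.
    have eqlo : rlo = size lo.
      rewrite /rlo -count_predT; apply: eq_in_count => z hz /=.
      by rewrite eS; move: (hlo_sub z hz); rewrite mem_filter => /andP[].
    have eqhi : rhi = size hi.
      rewrite /rhi -count_predT; apply: eq_in_count => z hz /=.
      by rewrite eS; move: (hhi_sub z hz); rewrite mem_filter => /andP[].
    have hla : (size lo <= 4 * q + 1)%N by apply: leq_trans (ltnW hslA) hm.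
    have hha : (size hi <= 4 * q + 1)%N by apply: leq_trans (ltnW hshA) hm.
    rewrite eS in hcrr; move: hcl hch; rewrite /Psi -/rlo -/rhi eqlo eqhi hla hha hm !subrr hcp0.
    move=> h1 h2; lra.
  + have hSs : size S = (4 * q + 1)%N by rewrite /S size_takel // ltnW.
    rewrite hSs in hcrr.
    have hcpm : (c_p <= size A - (4 * q + 1))%N.
      suff hh : (count (fun z => kn1 v z == None) [seq z <- A | z != v] <= size A - (4 * q + 1))%N.
        by apply: (leq_trans hcp); exact: hh.
      rewrite count_filter.
      have e := count_predC (mem S) A; rewrite count_take_mem // hSs in e.
      rewrite -e addKn; apply: sub_count => z /= /andP[hz nzv].
      by apply/negP => hzS; move: hz; rewrite (negbTE (knv z hzS nzv)).
    have irr : forall u, beats kn1 u u = false.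
      move=> u; rewrite /beats; have := hc1 u u; case: (kn1 u u) => //= t [].
      by case: t.
    have tour : forall u w, u \in S -> w \in S -> u != w -> (beats kn1 u w + beats kn1 w u = 1)%N.
      move=> u w hu hw nuw; rewrite /beats (hc1 u w).
      by case: (kn1 u w) (allS u w hu hw nuw) => // -[].
    have hgood : good q kn1 S v.
      by apply: nth_find; apply: (exists_good uS irr tour hSs).
    have btv : forall z, z \in S -> beats kn1 v z = (z != v) && g z.
      move=> z hz; case: (eqVneq z v) => [->|nzv]; first by rewrite irr.
      have hzs : z \in zs by rewrite /zs mem_filter nzv hSA.
      rewrite /beats; case e: (kn1 v z) (knv z hz nzv) => [t|] // _.
      by rewrite (hgk z t hzs e); case: t {e}.
    have bzv : forall z, z \in S -> beats kn1 z v = (z != v) && ~~ g z.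
      move=> z hz; case: (eqVneq z v) => [->|nzv]; first by rewrite irr.
      have hzs : z \in zs by rewrite /zs mem_filter nzv hSA.
      rewrite /beats (hc1 v z); case e: (kn1 v z) (knv z hz nzv) => [t|] // _.
      by rewrite (hgk z t hzs e); case: t {e}.
    have erlo' : rlo = count (beats kn1 v) S by rewrite erlo; apply: eq_in_count => z hz; rewrite btv.
    have erhi' : rhi = count (beats kn1 ^~ v) S by rewrite erhi; apply: eq_in_count => z hz /=; rewrite bzv.
    case/andP: hgood => hg1 hg2.
    have hsum : (rlo + rhi = 4 * q)%N.
      rewrite erlo erhi -count_predUI.
      have -> : count (predI (fun z => (z != v) && g z) (fun z => (z != v) && ~~ g z)) S = 0%N.
        by apply/eqP; rewrite -leqn0 leqNgt -has_count; apply/hasPn => z _ /=; case: (g z); rewrite ?andbF.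
      rewrite addn0.
      have -> : count (predU (fun z => (z != v) && g z) (fun z => (z != v) && ~~ g z)) S = count (fun z => z != v) S.
        by apply: eq_count => z /=; case: (g z); rewrite ?andbT ?andbF ?orbF.
      have hvS : v \in S.
        rewrite /v; case: (ltnP (find (good q kn1 S) S) (size S)) => hfs; first by apply: mem_nth.
        by rewrite nth_default // /S /A addn1 /= mem_head.
      have := count_predC (fun z => z != v) S; rewrite hSs.
      have -> : count (predC (fun z => z != v)) S = 1%N.
        by rewrite (eq_count (a2 := pred1 v)) ?count_uniq_mem ?hvS // => z /=; rewrite negbK.
      by rewrite !addn1 => -[].
    have hab : (size lo + size hi + 1 = size A)%N by rewrite eslh addn1 eszs.
    have h1 : (q <= rlo <= size lo)%N by rewrite erlo' hg1 -erlo' hrlo_le.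
    have h2 : (q <= rhi <= size hi)%N by rewrite erhi' hg2 -erhi' hrhi_le.
    have H := node_ineq R hm hrs hab hsum h1 h2.
    rewrite -/rlo -/rhi in hcl hch.
    have hcpR : (c_p%:R : R) <= (size A - (4 * q + 1))%N%:R by rewrite ler_nat.
    rewrite -hszA; lra.
Qed.
End Main.

Local Open Scope ring_scope.

Lemma lpermE n (l : seq 'I_n) : uniq l -> size l = n -> forall i, lperm l i = nth i l i.
Proof.
move=> ul sl; rewrite /lperm.
destruct (@idP (injectiveb (fun i : 'I_n => nth i l i))) as [H|H]; first by move=> i; rewrite permE.
exfalso; apply: H; apply/injectiveP => u w.
rewrite [nth w l w](set_nth_default u) ?sl ?ltn_ord // => /eqP.
by rewrite nth_uniq ?sl ?ltn_ord // => /eqP /val_inj.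
Qed.

Theorem mainTheorem11 :
  exists A : forall n : nat, dtree n,
    forall (R : realType) (n : nat) (x : 'I_n -> R) (c : nat) (p : {perm 'I_n}),
      run x (A n) c p ->
      (c%:R <= 4 * (n%:R * Num.sqrt n%:R) :> R) /\ ksorted 2 x p.
Proof.
exists (fun n => algo n (qn n)) => R n x c p hr.
have hs : sound x (fun _ _ : 'I_n => None) by [].
have hc : consis (fun _ _ : 'I_n => None) by [].
have := @run_solve R n x (qn n) n _ 0 (enum 'I_n) _ c p hr hs hc (enum_uniq _).
rewrite size_enum_ord => /(_ (leqnn _) (leq0n _) (leq0n _)) [].
  by move=> u w; rewrite take0.
move=> kn' [l [c1 [c2 [[e hr2 _ _ _] [hpl hpw hcost]]]]].
inversion hr2; subst.
split.
  rewrite addn0; apply: le_trans hcost _.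
  rewrite /qn; case: ifP => h65.
    by rewrite /Psi (leq_trans h65) // {2}/Cb bin0n subr0; apply: small_bound.
  have [h1 h2] := @qsearch_spec n 0 n (leq0n _) (leqnn _).
  by apply: big_bound => //; rewrite leqNgt ltnS h65.
have ul : uniq l by rewrite (perm_uniq hpl) enum_uniq.
have sl : size l = n by rewrite (perm_size hpl) size_enum_ord.
move=> a b hba; rewrite !lpermE // (set_nth_default b a) ?sl ?ltn_ord //.
by move/pairwiseP: hpw => /(_ b b a); apply; rewrite ?inE ?sl ?ltn_ord.
Qed.
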